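(* Let $G$ be an ADMG and let $v_1,v_2,v_3$ be distinct vertices of $G$ such that $G$ contains the edges $v_1\to v_2$, $v_2\to v_3$, $v_2\leftrightarrow v_3$ and $v_1\to v_3$. Then the ADMG $G'$ obtained from $G$ by deleting the edge $v_1\to v_3$ is Markov equivalent to $G$.
   Context: An ADMG (acyclic directed mixed graph) has directed edges $v\to w$ forming no directed cycle and bidirected edges $v\leftrightarrow w$ (unordered pairs), $v\neq w$. A path from $a$ to $b$ is a sequence $v_1,e_1,\dots,e_{k-1},v_k$ with $v_1=a\ne b=v_k$ (vertices may repeat), each $e_j$ an edge (directed either way, or bidirected) between $v_j,v_{j+1}$; an internal $v_j$ is a collider if both $e_{j-1},e_j$ have an arrowhead at $v_j$ (directed into $v_j$ or bidirected). $x$ is a descendant of $v$ if $x=v$ or there is a directed path from $v$ to $x$. The path is active given $Z\subseteq V\setminus\{a,b\}$ if every internal non-collider is not in $Z$ and every collider is in $Z$ or has a descendant in $Z$. $a,b$ are d-connected given $Z$ if an active path exists, otherwise d-separated. Two graphs on the same vertex set are Markov equivalent if they have the same d-separation statements for all $a,b,Z$. *)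

(* Defs.v *)
From mathcomp Require Import all_boot.
Set Implicit Arguments. Unset Strict Implicit. Unset Printing Implicit Defensive.

(* A mixed graph on a finite vertex type T: directed edges D x y means x -> y,
   bidirected edges B x y means x <-> y (B symmetric, irreflexive). *)

Definition is_ADMG (T : finType) (D B : rel T) : Prop :=
  [/\ irreflexive D,
      (forall x y, D x y -> ~~ connect D y x),
      symmetric B & irreflexive B].

Inductive ekind := Fwd | Bwd | Bi .

Definition edge_ok (T : finType) (D B : rel T) (k : ekind) (x y : T) : bool :=
  match k with Fwd => D x y | Bwd => D y x | Bi => B x y end.

(* A path starting at x given by its list of steps (edge kind, next vertex). *)
Fixpoint is_walk (T : finType) (D B : rel T) (x : T) (s : seq (ekind * T)) : bool :=
  if s is (k, y) :: s' then edge_ok D B k x y && is_walk D B y s' else true.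

(* arrowhead at the head vertex v_{j+1} of the edge e_j *)
Definition head_arrow (k : ekind) : bool := if k is Bwd then false else true.
(* arrowhead at the tail vertex v_j of the edge e_j *)
Definition tail_arrow (k : ekind) : bool := if k is Fwd then false else true.

(* v was reached via an edge of kind k, then the path continues with s. *)
Fixpoint active_from (T : finType) (D : rel T) (Z : {set T})
    (k : ekind) (v : T) (s : seq (ekind * T)) : bool :=
  if s is (k', w) :: s' then
    (if head_arrow k && tail_arrow k'
     then [exists z in Z, connect D v z]   (* collider with a descendant in Z *)
     else v \notin Z)                      (* non-collider not in Z *)
    && active_from D Z k' w s'
  else true.

Definition active_path (T : finType) (D : rel T) (Z : {set T})
    (s : seq (ekind * T)) : bool :=
  if s is (k, w) :: s' then active_from D Z k w s' else true.

Definition d_connected (T : finType) (D B : rel T) (a b : T) (Z : {set T}) : Prop :=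
  exists s : seq (ekind * T),
    [&& is_walk D B a s, last a (map snd s) == b & active_path D Z s].

Definition markov_equiv (T : finType) (D1 B1 D2 B2 : rel T) : Prop :=
  forall (a b : T) (Z : {set T}), a != b -> a \notin Z -> b \notin Z ->
    (d_connected D1 B1 a b Z <-> d_connected D2 B2 a b Z).

Definition delete_dedge (T : finType) (D : rel T) (u w : T) : rel T :=
  [rel x y | D x y && ~~ ((x == u) && (y == w))].

(* Main.v *)
Require Import Defs.
From mathcomp Require Import all_boot.
Set Implicit Arguments. Unset Strict Implicit.

Lemma active_from_ext (T : finType) (D1 D2 : rel T) (Z : {set T}) :
  connect D1 =2 connect D2 ->
  forall s k v, active_from D1 Z k v s = active_from D2 Z k v s.
Proof.
move=> E; elim=> [|[k' w] s IH] k v //=.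
rewrite IH; congr (_ && _); case: ifP => // _.
by apply: eq_existsb => z; rewrite E.
Qed.

Lemma is_walk_mono (T : finType) (D1 D2 B : rel T) :
  subrel D1 D2 -> forall s x, is_walk D1 B x s -> is_walk D2 B x s.
Proof.
move=> sub; elim=> [|[k y] s IH] x //= /andP[h1 h2].
rewrite IH // andbT; case: k h1 => /=; try exact: sub; done.
Qed.

Lemma active_path_from (T : finType) (D : rel T) (Z : {set T}) a s :
  a \notin Z -> active_path D Z s = active_from D Z Bwd a s.
Proof. by move=> aZ; case: s => [|[k y] s] //=; rewrite aZ. Qed.

Definition isbad (T : finType) (v1 v3 : T) k (x y : T) : bool :=
  match k with Fwd => (x == v1) && (y == v3) | Bwd => (x == v3) && (y == v1)
  | Bi => false end.

Fixpoint repl (T : finType) (v1 v2 v3 : T) (b : bool) (x : T)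
  (s : seq (ekind * T)) : seq (ekind * T) :=
  if s is (k, y) :: s' then
    if isbad v1 v3 k x y then
      match k with
      | Fwd => (Fwd, v2) :: (if b then Bi else Fwd, y) :: repl v1 v2 v3 b y s'
      | _ => (if b then Bi else Bwd, v2) :: (Bwd, y) :: repl v1 v2 v3 b y s'
      end
    else (k, y) :: repl v1 v2 v3 b y s'
  else [::].

Theorem mainTheorem9 (T : finType) (D B : rel T) (v1 v2 v3 : T) :
  is_ADMG D B -> uniq [:: v1; v2; v3] ->
  D v1 v2 -> D v2 v3 -> B v2 v3 -> D v1 v3 ->
  markov_equiv D B (delete_dedge D v1 v3) B.
Proof.
move=> [_ _ Bsym _] /= /and3P[]; rewrite !inE negb_or => /andP[n12 n13] n23 _.
move=> d12 d23 b23 d13.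
set D' := delete_dedge D v1 v3.
have d'12 : D' v1 v2.
  by rewrite /D' /delete_dedge /= d12 eqxx /= (negbTE n23).
have d'23 : D' v2 v3 by rewrite /D' /delete_dedge /= d23 eq_sym (negbTE n12).
have subD : subrel D' D by move=> x y /andP[].
have E : connect D' =2 connect D.
  move=> x y; apply/idP/idP; apply: connect_sub => {}x {}y h.
  - by apply: connect1; apply: subD.
  - case b: ((x == v1) && (y == v3)).
      case/andP: b => /eqP -> /eqP ->.
      by apply: (connect_trans (connect1 d'12)); apply: connect1.
    by apply: connect1; rewrite /D' /delete_dedge /= h b.
move=> a b Z _ aZ bZ; split; last first.
  case=> s /and3P[w l act]; exists s; rewrite (is_walk_mono subD w) l /=.
  by rewrite (active_path_from _ _ aZ) -(active_from_ext Z E) -(active_path_from _ _ aZ).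
case=> s /and3P[w l act].
set bb := v2 \in Z.
have Hw : forall s x, is_walk D B x s -> is_walk D' B x (repl v1 v2 v3 bb x s).
  elim=> [|[k y] s' IH] x //= /andP[h1 h2].
  case bad: (isbad v1 v3 k x y).
    case: k bad h1 => //= /andP[/eqP ex /eqP ey] _; subst x y; rewrite /= IH //.
    - by rewrite d'12 andbT; case: (bb).
    - by rewrite d'12 !andbT; case: (bb) => //=; rewrite Bsym.
  rewrite /= IH // andbT; case: k bad h1 => //= bad h1; rewrite /D' /delete_dedge /= h1 /=.
    by rewrite bad.
  by rewrite andbC bad.
have Hl : forall s x, last x (map snd (repl v1 v2 v3 bb x s)) = last x (map snd s).
  elim=> [|[k y] s' IH] x //=.
  by case: isbad => //=; case: k => /=.
have Ha : forall s x k k0, head_arrow k0 = head_arrow k ->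
    active_from D Z k x s -> active_from D Z k0 x (repl v1 v2 v3 bb x s).
  elim=> [|[k' y] s' IH] x k k0 hk //= /andP[c1 c2].
  case bad: (isbad v1 v3 k' x y).
    have IH' := fun k0 h => IH y _ k0 h c2.
    move: IH'; rewrite /bb; case Z2: (v2 \in Z) => IH';
      case: k' bad c1 c2 IH' => //= bad c1 c2 IH'; rewrite ?hk ?c1 ?IH' ?andbT //=.
      1,2: by apply/existsP; exists v2; rewrite Z2 connect0.
      1,2: by rewrite Z2.
  by simpl; rewrite hk c1 (IH _ k').
exists (repl v1 v2 v3 bb a s); rewrite Hw //= Hl l /=.
rewrite (active_path_from _ _ aZ) (active_from_ext Z E).
by apply: (Ha _ _ Bwd) => //; rewrite -(active_path_from _ _ aZ).
Qed.
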